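(* Let $m:\mathbb{R}^3\to\mathbb{R}$ be given by $$m(\xi_1,\xi_2,\xi_3):=\frac{\xi_3}{(\xi_1^2\xi_2^2+\xi_3^2)^{1/2}}.$$ Then for all multi-indices $\alpha=(\alpha_1,\alpha_2,\alpha_3)$, $$|\partial^\alpha m(\xi)|\lesssim|\xi_1|^{-\alpha_1+\alpha_2}\,|(|\xi_1|\xi_2,\xi_3)|^{-\alpha_2-\alpha_3}$$ (so $m$ is a Fefferman–Pipher multiplier). Moreover, $\partial_{\xi_i}m\notin L^\infty$ for each $i=1,2,3$.
   Context: Here $|(|\xi_1|\xi_2,\xi_3)|=(\xi_1^2\xi_2^2+\xi_3^2)^{1/2}$ denotes the Euclidean norm of the vector $(|\xi_1|\xi_2,\xi_3)\in\mathbb{R}^2$, and the estimate is required at all points where $m$ is smooth (i.e. $(\xi_1\xi_2,\xi_3)\neq0$, $\xi_1\ne0$), with implicit constant depending on $\alpha$. A function satisfying these derivative estimates for all multi-indices is called a Fefferman–Pipher (Zygmund) multiplier. *)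

(* Defs.v *)
From HB Require Import structures.
From mathcomp Require Import all_boot all_order all_algebra.
From mathcomp Require Import all_classical all_reals all_analysis.
Set Implicit Arguments. Unset Strict Implicit. Unset Printing Implicit Defensive.
Import Order.TTheory GRing.Theory Num.Theory.
Import numFieldNormedType.Exports.
Local Open Scope ring_scope.

Section Defs.
Variable R : realType.

Definition pt3 := ((R * R) * R)%type.
Definition xi1 (x : pt3) : R := x.1.1.
Definition xi2 (x : pt3) : R := x.1.2.
Definition xi3 (x : pt3) : R := x.2.

Definition e1 : pt3 := ((1, 0), 0).
Definition e2 : pt3 := ((0, 1), 0).
Definition e3 : pt3 := ((0, 0), 1).

(* the norm |(|xi1| xi2, xi3)| = (xi1^2 xi2^2 + xi3^2)^(1/2) *)
Definition rho (x : pt3) : R := Num.sqrt (xi1 x ^+ 2 * xi2 x ^+ 2 + xi3 x ^+ 2).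

Definition m (x : pt3) : R := xi3 x / rho x.

Definition pd (v : pt3) (f : pt3 -> R) : pt3 -> R := 'D_v f.

Definition pdalpha (a1 a2 a3 : nat) (f : pt3 -> R) : pt3 -> R :=
  iter a1 (pd e1) (iter a2 (pd e2) (iter a3 (pd e3) f)).

Definition leb3 := ((@lebesgue_measure R \x @lebesgue_measure R) \x @lebesgue_measure R)%E.

(* f in L^infty means (in particular) f is essentially bounded *)
Definition ess_bounded (f : pt3 -> R) : Prop :=
  exists M : R, {ae leb3, forall x, `|f x| <= M}.
End Defs.

(* Main.v *)
Require Import Defs.
From HB Require Import structures.
From mathcomp Require Import all_boot all_order all_algebra.
From mathcomp Require Import all_classical all_reals all_analysis.
From mathcomp Require Import ring lra zify.
Import Order.TTheory GRing.Theory Num.Theory.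
Import numFieldNormedType.Exports.
Local Open Scope ring_scope.
Section S.
Variable R : realType.
Implicit Types (x v : pt3 R).

Lemma is_derive_along (f : pt3 R -> R) x v (df : R) :
  is_derive (0:R) 1 (fun h : R => f (h *: v + x)) df -> is_derive x v f df.
Proof.
move=> [d1 <-]; split; first exact/derivable1P.
rewrite /derive. set g1 := fun h => h^-1 *: _; set g2 := fun h => h^-1 *: _. suff -> : g1 = g2 by []. apply/funext => h; rewrite /g1 /g2 /=.
by rewrite scale0r add0r addr0 [_%:A]mulr1.
Qed.

Lemma is_derive_aff (c d : R) :
  is_derive (0:R) 1 (fun h : R => h * c + d) c.
Proof.
have -> : (fun h : R => h * c + d) = ((id * cst c) + cst d) :> (R -> R) by apply/funext.
apply: is_derive_eq.
by rewrite /= scaler0 add0r [_ *: _]mulr1 addr0.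
Qed.

Lemma is_derive_xi1 x v : is_derive x v (@xi1 R) (xi1 v).
Proof.
apply: is_derive_along; apply: is_derive_eq.
by rewrite /xi1 scale0r add0r addr0 [_%:A]mulr1.
Qed.
Lemma is_derive_xi2 x v : is_derive x v (@xi2 R) (xi2 v).
Proof.
apply: is_derive_along; apply: is_derive_eq.
by rewrite /xi2 scale0r add0r addr0 [_%:A]mulr1.
Qed.
Lemma is_derive_xi3 x v : is_derive x v (@xi3 R) (xi3 v).
Proof.
apply: is_derive_along; apply: is_derive_eq.
by rewrite /xi3 scale0r add0r addr0 [_%:A]mulr1.
Qed.

Lemma dM {f g : pt3 R -> R} {x v df dg} : is_derive x v f df -> is_derive x v g dg ->
  is_derive x v (fun y => f y * g y) (f x * dg + g x * df).
Proof. move=> H1 H2; exact: (is_deriveM H1 H2). Qed.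
Lemma dD {f g : pt3 R -> R} {x v df dg} : is_derive x v f df -> is_derive x v g dg ->
  is_derive x v (fun y => f y + g y) (df + dg).
Proof. move=> H1 H2; exact: (is_deriveD H1 H2). Qed.
Lemma dX n {f : pt3 R -> R} {x v df} : is_derive x v f df ->
  is_derive x v (fun y => f y ^+ n) (n%:R * f x ^+ n.-1 * df).
Proof. move=> H1; rewrite -exprfctE; exact: (is_deriveX n H1). Qed.
Lemma dC (c : R) x v : is_derive x v (fun _ : pt3 R => c) 0.
Proof. exact: is_derive_cst. Qed.
Lemma dV {f : pt3 R -> R} {x v df} : f x != 0 -> is_derive x v f df ->
  is_derive x v (fun y => (f y)^-1) (- (f x) ^- 2 * df).
Proof.
move=> fx0 [H1 H2]; split; first exact: derivableV.
by rewrite deriveV // H2.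
Qed.
Lemma dE {f : pt3 R -> R} {x v df} df' : is_derive x v f df -> df = df' -> is_derive x v f df'.
Proof. by move=> ? <-. Qed.

Definition uu x := xi1 x * xi2 x.
Definition vv x := xi3 x.
Definition du x v := xi1 x * xi2 v + xi2 x * xi1 v.
Definition sq x := uu x ^+ 2 + vv x ^+ 2.

Lemma is_derive_uu x v : is_derive x v uu (du x v).
Proof. rewrite {1}/uu; apply: dE; first exact: dM (is_derive_xi1 x v) (is_derive_xi2 x v). by []. Qed.
Lemma is_derive_vv x v : is_derive x v vv (xi3 v).
Proof. exact: is_derive_xi3. Qed.

Lemma is_derive_sq x v : is_derive x v sq (2 * (uu x * du x v + vv x * xi3 v)).
Proof.
rewrite {1}/sq; apply: dE; first exact: dD (dX 2 (is_derive_uu x v)) (dX 2 (is_derive_vv x v)).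
rewrite /=; ring.
Qed.

Lemma rhoE x : rho x = Num.sqrt (sq x).
Proof. by rewrite /rho /sq /uu /vv exprMn. Qed.

Lemma sq_ge0 x : 0 <= sq x.
Proof. by rewrite /sq addr_ge0 // sqr_ge0. Qed.

Lemma rho2 x : rho x ^+ 2 = sq x.
Proof. by rewrite rhoE sqr_sqrtr // sq_ge0. Qed.

Lemma derivable_rho x v : rho x != 0 -> derivable (@rho R) x v.
Proof.
move=> r0; apply/derivable1P.
have hs : derivable (fun h : R => sq (h *: v + x)) 0 1.
  apply/(derivable1P sq x v). by case: (is_derive_sq x v).
have -> : (fun h : R => rho (h *: v + x)) = Num.sqrt \o (fun h : R => sq (h *: v + x)).
  by apply/funext => h; rewrite /= rhoE.
apply/derivable1_diffP; apply: differentiable_comp; first exact/derivable1_diffP.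
apply/derivable1_diffP; rewrite /= scale0r add0r.
have sp : 0 < sq x by rewrite lt_neqAle sq_ge0 andbT eq_sym; move: r0; rewrite rhoE; apply: contra => /eqP ->; rewrite sqrtr0.
by case: (is_derive1_sqrt sp).
Qed.

Lemma is_derive_rho x v : rho x != 0 ->
  is_derive x v (@rho R) ((uu x * du x v + vv x * xi3 v) / rho x).
Proof.
move=> r0; have Hd := derivable_rho x v r0.
have H1 := derivableP Hd.
have H2 := dX 2 H1.
have e : (fun y => rho y ^+ 2) = sq by apply/funext => y; rewrite rho2.
rewrite e in H2.
have E : 2 * rho x ^+ 2.-1 * 'D_v (@rho R) x = 2 * (uu x * du x v + vv x * xi3 v).
  by rewrite -(@derive_val _ _ _ _ _ _ _ H2) (@derive_val _ _ _ _ _ _ _ (is_derive_sq x v)).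
apply: dE H1 _.
have two : (2:R) != 0 by rewrite pnatr_eq0.
move: E; rewrite expr1 -mulrA => /(mulfI two) E.
by rewrite -E mulrC mulKf.
Qed.
Lemma c1 (y : pt3 R) : {for y, continuous (@xi1 R)}.
Proof. rewrite /xi1. apply: (cvg_comp _ _ cvg_fst cvg_fst). Qed.
Lemma c2 (y : pt3 R) : {for y, continuous (@xi2 R)}.
Proof. rewrite /xi2. apply: (cvg_comp _ _ cvg_fst cvg_snd). Qed.
Lemma c3 (y : pt3 R) : {for y, continuous (@xi3 R)}.
Proof. rewrite /xi3. exact: cvg_snd. Qed.
Lemma crho (y : pt3 R) : {for y, continuous (@rho R)}.
Proof.
have h := cvgD (cvgM (cvgM (c1 y) (c1 y)) (cvgM (c2 y) (c2 y))) (cvgM (c3 y) (c3 y)).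

have h2 : ((fun z => xi1 z ^+ 2 * xi2 z ^+ 2 + xi3 z ^+ 2) @ y --> (xi1 y ^+2 * xi2 y ^+2 + xi3 y ^+2))%classic.
  have -> : (fun z => xi1 z ^+ 2 * xi2 z ^+ 2 + xi3 z ^+ 2) = ((@xi1 R \* @xi1 R) \* (@xi2 R \* @xi2 R)) \+ (@xi3 R \* @xi3 R).
    by apply/funext => z; rewrite /= !expr2.
  rewrite !expr2; apply: h; exact: nbhs_filter.
exact: (cvg_comp _ _ h2 (@sqrt_continuous R _)).
Qed.
Lemma nearU (y : pt3 R) : xi1 y != 0 -> rho y != 0 ->
  \forall z \near y, xi1 z != 0 /\ rho z != 0.
Proof.
move=> h1 h2. near=> z. split.
- near: z. exact: cvgr_neq0 (c1 y) h1.
- near: z. exact: cvgr_neq0 (crho y) h2.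
Unshelve. all: by end_near. Qed.

Inductive HP : int -> (R -> R -> R) -> Prop :=
| HP0 d : HP d (fun _ _ => 0)
| HP1 : HP 0 (fun _ _ => 1)
| HPD d f g : HP d f -> HP d g -> HP d (fun a b => f a b + g a b)
| HPZ d c f : HP d f -> HP d (fun a b => c * f a b)
| HPu d f : HP d f -> HP (d + 1) (fun a b => a * f a b)
| HPv d f : HP d f -> HP (d + 1) (fun a b => b * f a b)
| HPe d e f g : HP d f -> d = e -> (forall a b, f a b = g a b) -> HP e g.

Lemma HP_bound d f : HP d f -> exists C : R, 0 <= C /\
  forall a b, 0 < a ^+ 2 + b ^+ 2 -> `|f a b| <= C * Num.sqrt (a ^+ 2 + b ^+ 2) ^ d.
Proof.
elim=> {d f}.
- move=> d; exists 0; split => // a b _; by rewrite normr0 mul0r.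
- exists 1; split => // a b _; by rewrite expr0z normr1 mulr1.
- move=> d f g _ [C1 [C1p H1]] _ [C2 [C2p H2]]; exists (C1 + C2); split; first exact: addr_ge0.
  move=> a b ab; rewrite mulrDl; apply: (le_trans (ler_normD _ _)); exact: lerD (H1 a b ab) (H2 a b ab).
- move=> d c f _ [C [Cp H]]; exists (`|c| * C); split; first by rewrite mulr_ge0.
  move=> a b ab; rewrite normrM -mulrA; apply: ler_wpM2l => //; exact: H.
- move=> d f _ [C [Cp H]]; exists C; split => // a b ab.
  have r0 : Num.sqrt (a ^+ 2 + b ^+ 2) \is a GRing.unit by rewrite unitfE sqrtr_eq0 -ltNge.
  rewrite exprzDr // expr1z normrM mulrA mulrC; apply: ler_pM => //.
    exact: H ab.
  by rewrite -sqrtr_sqr ler_wsqrtr // lerDl sqr_ge0.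
- move=> d f _ [C [Cp H]]; exists C; split => // a b ab.
  have r0 : Num.sqrt (a ^+ 2 + b ^+ 2) \is a GRing.unit by rewrite unitfE sqrtr_eq0 -ltNge.
  rewrite exprzDr // expr1z normrM mulrA mulrC; apply: ler_pM => //.
    exact: H ab.
  by rewrite -sqrtr_sqr ler_wsqrtr // lerDr sqr_ge0.
- move=> d e f g _ [C [Cp H]] <- fg; exists C; split => // a b ab; rewrite -fg; exact: H.
Qed.

Definition Dspec (f fu fv : R -> R -> R) := forall (g h : pt3 R -> R) x w dg dh,
  is_derive x w g dg -> is_derive x w h dh ->
  is_derive x w (fun y => f (g y) (h y)) (fu (g x) (h x) * dg + fv (g x) (h x) * dh).

Lemma HP_cast d e f : HP d f -> d = e -> HP e f.
Proof. by move=> H <-. Qed.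
Arguments HP_cast {d e f}.
Arguments HPD {d f g}.
Arguments HPZ {d} c {f}.
Arguments HPu {d f}.
Arguments HPv {d f}.
Arguments HPe {d e f g}.

Lemma HP_deriv d f : HP d f -> exists fu fv, HP (d - 1) fu /\ HP (d - 1) fv /\ Dspec f fu fv.
Proof.
elim=> {d f}.
- move=> d; exists (fun _ _ => 0), (fun _ _ => 0); split; [exact: HP0|split; first exact: HP0].
  move=> g h x w dg dh _ _; apply: (dE _ (dC 0 x w)). by rewrite !mul0r addr0.
- exists (fun _ _ => 0), (fun _ _ => 0); split; [exact: HP0|split; first exact: HP0].
  move=> g h x w dg dh _ _; apply: (dE _ (dC 1 x w)). by rewrite !mul0r addr0.
- move=> d f g _ [fu [fv [Hu [Hv Df]]]] _ [gu [gv [Gu [Gv Dg]]]].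
  exists (fun a b => fu a b + gu a b), (fun a b => fv a b + gv a b).
  split; first exact: HPD. split; first exact: HPD.
  move=> g1 h1 x w dg dh H1 H2; apply: (dE _ (dD (Df _ _ _ _ _ _ H1 H2) (Dg _ _ _ _ _ _ H1 H2))).
  by rewrite /=; ring.
- move=> d c f _ [fu [fv [Hu [Hv Df]]]].
  exists (fun a b => c * fu a b), (fun a b => c * fv a b).
  split; first exact: HPZ. split; first exact: HPZ.
  move=> g1 h1 x w dg dh H1 H2; apply: (dE _ (dM (dC c x w) (Df _ _ _ _ _ _ H1 H2))).
  by rewrite /=; ring.
- move=> d f Hf [fu [fv [Hu [Hv Df]]]].
  exists (fun a b => f a b + a * fu a b), (fun a b => a * fv a b).
  split. apply: HPD; first by apply: (HP_cast Hf); ring.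
         by apply: (HP_cast (HPu Hu)); ring.
  split; first by apply: (HP_cast (HPu Hv)); ring.
  move=> g1 h1 x w dg dh H1 H2; apply: (dE _ (dM H1 (Df _ _ _ _ _ _ H1 H2))).
  by rewrite /=; ring.
- move=> d f Hf [fu [fv [Hu [Hv Df]]]].
  exists (fun a b => b * fu a b), (fun a b => f a b + b * fv a b).
  split; first by apply: (HP_cast (HPv Hu)); ring.
  split. apply: HPD; first by apply: (HP_cast Hf); ring.
         by apply: (HP_cast (HPv Hv)); ring.
  move=> g1 h1 x w dg dh H1 H2; apply: (dE _ (dM H2 (Df _ _ _ _ _ _ H1 H2))).
  by rewrite /=; ring.
- move=> d e f g _ [fu [fv [Hu [Hv Df]]]] de fg; subst e.
  exists fu, fv; split => //; split => //.
  move=> g1 h1 x w dg dh H1 H2.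
  have -> : (fun y => g (g1 y) (h1 y)) = (fun y => f (g1 y) (h1 y)) by apply/funext => y; rewrite fg.
  exact: Df.
Qed.

Definition repf (P : R -> R -> R) (q a1 a2 : nat) (x : pt3 R) : R :=
  P (uu x) (vv x) * xi1 x ^+ a2 * ((xi1 x ^+ a1)^-1 * (rho x ^+ q)^-1).

Lemma repf_derive P fu fv q a1 a2 x w : Dspec P fu fv -> xi1 x != 0 -> rho x != 0 ->
  is_derive x w (repf P q a1 a2)
   ((fu (uu x) (vv x) * du x w + fv (uu x) (vv x) * xi3 w) * xi1 x ^+ a2 * ((xi1 x ^+ a1)^-1 * (rho x ^+ q)^-1)
   + P (uu x) (vv x) * (a2%:R * xi1 x ^+ a2.-1 * xi1 w) * ((xi1 x ^+ a1)^-1 * (rho x ^+ q)^-1)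
   + P (uu x) (vv x) * xi1 x ^+ a2 * ((xi1 x ^+ a1)^-1 * (- (rho x ^+ q) ^- 2 * (q%:R * rho x ^+ q.-1 * ((uu x * du x w + vv x * xi3 w) / rho x)))
        + (rho x ^+ q)^-1 * (- (xi1 x ^+ a1) ^- 2 * (a1%:R * xi1 x ^+ a1.-1 * xi1 w)))).
Proof.
move=> DP h1 h2.
have HP := DP _ _ x w _ _ (is_derive_uu x w) (is_derive_vv x w).
have HX2 := dX a2 (is_derive_xi1 x w).
have HX1 := dV (expf_neq0 a1 h1) (dX a1 (is_derive_xi1 x w)).
have HR := dV (expf_neq0 q h2) (dX q (is_derive_rho x w h2)).
rewrite {1}/repf; apply: (dE _ (dM (dM HP HX2) (dM HX1 HR))).
rewrite /=; ring.
Qed.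

Ltac finish h1 h2 :=
  rewrite ?exprS ?expr0 /=; field; rewrite ?(mulf_neq0, expf_neq0, h1, h2) //.

Lemma step3 P fu fv q a1 a2 x : Dspec P fu fv -> xi1 x != 0 -> rho x != 0 ->
  'D_(e3 R) (repf P q a1 a2) x =
  repf (fun a b => fv a b * (a ^+ 2 + b ^+ 2) - q%:R * (b * P a b)) q.+2 a1 a2 x.
Proof.
move=> DP h1 h2.
rewrite (@derive_val _ _ _ _ _ _ _ (repf_derive P fu fv q a1 a2 x (e3 R) DP h1 h2)).
rewrite /repf /= -[uu x ^+ 2 + vv x ^+ 2]/(sq x) -rho2.
rewrite /du /e3 /xi1 /xi2 /xi3 /=.
move: h1; rewrite /xi1 => h1.
case: q => [|q]; case: a1 => [|a1]; case: a2 => [|a2]; finish h1 h2.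
Qed.

Lemma step2 P fu fv q a1 a2 x : Dspec P fu fv -> xi1 x != 0 -> rho x != 0 ->
  'D_(e2 R) (repf P q a1 a2) x =
  repf (fun a b => fu a b * (a ^+ 2 + b ^+ 2) - q%:R * (a * P a b)) q.+2 a1 a2.+1 x.
Proof.
move=> DP h1 h2.
rewrite (@derive_val _ _ _ _ _ _ _ (repf_derive P fu fv q a1 a2 x (e2 R) DP h1 h2)).
rewrite /repf /= -[uu x ^+ 2 + vv x ^+ 2]/(sq x) -rho2.
rewrite /du /uu /vv /e2 /xi1 /xi2 /xi3 /=.
move: h1; rewrite /xi1 => h1.
case: q => [|q]; case: a1 => [|a1]; case: a2 => [|a2]; finish h1 h2.
Qed.

Lemma step1 P fu fv q a1 a2 x : Dspec P fu fv -> xi1 x != 0 -> rho x != 0 ->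
  'D_(e1 R) (repf P q a1 a2) x =
  repf (fun a b => a * fu a b * (a ^+ 2 + b ^+ 2) + (a2%:R - a1%:R) * P a b * (a ^+ 2 + b ^+ 2)
                   - q%:R * (a ^+ 2 * P a b)) q.+2 a1.+1 a2 x.
Proof.
move=> DP h1 h2.
rewrite (@derive_val _ _ _ _ _ _ _ (repf_derive P fu fv q a1 a2 x (e1 R) DP h1 h2)).
rewrite /repf /= -[uu x ^+ 2 + vv x ^+ 2]/(sq x) -rho2.
rewrite /du /uu /vv /e1 /xi1 /xi2 /xi3 /=.
move: h1; rewrite /xi1 => h1.
case: q => [|q]; case: a1 => [|a1]; case: a2 => [|a2]; finish h1 h2.
Qed.

Lemma HP_sub d f g : HP d f -> HP d g -> HP d (fun a b => f a b - g a b).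
Proof.
move=> Hf Hg; apply: (HPe (HPD Hf (HPZ (-1) Hg))) => // a b; ring.
Qed.
Lemma HP_sq d f : HP d f -> HP (d + 2) (fun a b => f a b * (a ^+ 2 + b ^+ 2)).
Proof.
move=> Hf; apply: (HPe (HPD (HPu (HPu Hf)) (HPv (HPv Hf)))); first by ring.
move=> a b; ring.
Qed.
Lemma HP_a2 d f : HP d f -> HP (d + 2) (fun a b => a ^+ 2 * f a b).
Proof.
move=> Hf; apply: (HPe (HPu (HPu Hf))); first by ring.
move=> a b; ring.
Qed.

Arguments HP_deriv {d f}.
Arguments HP_bound {d f}.
Arguments HP_sub {d f g}.
Arguments HP_sq {d f}.
Arguments HP_a2 {d f}.

Definition Rep (a1 a2 a3 : nat) (f : pt3 R -> R) := exists d P q, HP d P /\ d - q%:Z = - (a2 + a3)%:Z /\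
  forall y, xi1 y != 0 -> rho y != 0 -> f y = repf P q a1 a2 y.

Lemma locD (f g : pt3 R -> R) (w x : pt3 R) : (forall y, xi1 y != 0 -> rho y != 0 -> f y = g y) ->
  xi1 x != 0 -> rho x != 0 -> 'D_w f x = 'D_w g x.
Proof.
move=> fg h1 h2; apply: near_eq_derive.
have N := nearU x h1 h2.
near=> z; have [z1 z2] : xi1 z != 0 /\ rho z != 0 by near: z.
exact: fg.
Unshelve. all: by end_near. Qed.

Lemma Rep3 a1 a2 a3 f : Rep a1 a2 a3 f -> Rep a1 a2 a3.+1 (pd (e3 R) f).
Proof.
move=> [d [P [q [HPd [deg Eq]]]]]; have [fu [fv [Hu [Hv DP]]]] := HP_deriv HPd.
exists (d + 1), (fun a b => fv a b * (a ^+ 2 + b ^+ 2) - q%:R * (b * P a b)), q.+2.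
split; first by apply: HP_sub; [apply: (HP_cast (HP_sq Hv)); ring | apply: HPZ; exact: HPv].
split; first by lia.
move=> y h1 h2; rewrite /pd (locD _ _ _ _ Eq h1 h2); apply: (step3 _ _ _ _ _ _ _ DP h1 h2).
Qed.

Lemma Rep2 a1 a2 a3 f : Rep a1 a2 a3 f -> Rep a1 a2.+1 a3 (pd (e2 R) f).
Proof.
move=> [d [P [q [HPd [deg Eq]]]]]; have [fu [fv [Hu [Hv DP]]]] := HP_deriv HPd.
exists (d + 1), (fun a b => fu a b * (a ^+ 2 + b ^+ 2) - q%:R * (a * P a b)), q.+2.
split; first by apply: HP_sub; [apply: (HP_cast (HP_sq Hu)); ring | apply: HPZ; exact: HPu].
split; first by lia.
move=> y h1 h2; rewrite /pd (locD _ _ _ _ Eq h1 h2); apply: (step2 _ _ _ _ _ _ _ DP h1 h2).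
Qed.

Lemma Rep1 a1 a2 a3 f : Rep a1 a2 a3 f -> Rep a1.+1 a2 a3 (pd (e1 R) f).
Proof.
move=> [d [P [q [HPd [deg Eq]]]]]; have [fu [fv [Hu [Hv DP]]]] := HP_deriv HPd.
exists (d + 2), (fun a b => a * fu a b * (a ^+ 2 + b ^+ 2) + (a2%:R - a1%:R) * P a b * (a ^+ 2 + b ^+ 2)
                   - q%:R * (a ^+ 2 * P a b)), q.+2.
split.
  apply: HP_sub; last by apply: HPZ; exact: HP_a2.
  apply: HPD; last by apply: (HPe (HPZ (a2%:R - a1%:R) (HP_sq HPd))) => // a b; ring.
  apply: (HPe (HP_sq (HPu Hu))); first by ring.
  move=> a b; ring.
split; first by lia.
move=> y h1 h2; rewrite /pd (locD _ _ _ _ Eq h1 h2); apply: (step1 _ _ _ _ _ _ _ DP h1 h2).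
Qed.

Lemma Rep0 : Rep 0 0 0 (@m R).
Proof.
exists 1, (fun a b => b * 1), 1%N; split; first exact: (HPv HP1).
split => // y h1 h2.
by rewrite /m /repf /vv /= !expr0 expr1 invr1 !mulr1 mul1r.
Qed.

Lemma Rep_all a1 a2 a3 : Rep a1 a2 a3 (pdalpha a1 a2 a3 (@m R)).
Proof.
rewrite /pdalpha.
elim: a1 => [|a1 IH]; last exact: Rep1.
elim: a2 => [|a2 IH]; last exact: Rep2.
elim: a3 => [|a3 IH]; last exact: Rep3.
exact: Rep0.
Qed.

Lemma bound_all a1 a2 a3 : exists C : R, 0 < C /\
  forall x : pt3 R, xi1 x != 0 -> rho x != 0 ->
   `|pdalpha a1 a2 a3 (@m R) x| <= C * `|xi1 x| ^ (a2%:Z - a1%:Z) * rho x ^- (a2 + a3).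
Proof.
have [d [P [q [HPd [deg Eq]]]]] := Rep_all a1 a2 a3.
have [C [C0 HC]] := HP_bound HPd.
exists (C + 1); split; first by lra.
move=> x h1 h2; rewrite Eq //.
have r0 : 0 < rho x by rewrite lt_neqAle eq_sym h2 /rho sqrtr_ge0.
have X0 : 0 < `|xi1 x| by rewrite normr_gt0.
have sqpos : 0 < uu x ^+ 2 + vv x ^+ 2 by rewrite -[_ + _]/(sq x) -rho2 exprn_gt0.
have HP' := HC _ _ sqpos.
rewrite -[_ + _]/(sq x) -rhoE in HP'.
rewrite /repf !normrM !normfV !normrX (ger0_norm (ltW r0)).
have eX : `|xi1 x| ^ (a2%:Z - a1%:Z) = `|xi1 x| ^+ a2 * (`|xi1 x| ^+ a1)^-1.
  by rewrite exprzDr ?unitfE ?(gt_eqF X0) // -invr_expz.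
have er : rho x ^- (a2 + a3) = rho x ^ d * (rho x ^+ q)^-1.
  rewrite (exprnP (rho x) q) invr_expz -exprzDr ?unitfE ?(gt_eqF r0) //.
  by rewrite deg -invr_expz.
rewrite eX er.
set K := `|xi1 x| ^+ a2 * ((`|xi1 x| ^+ a1)^-1 * (rho x ^+ q)^-1).
have K0 : 0 <= K by rewrite /K !mulr_ge0 // ?invr_ge0 ?exprn_ge0 // ?ltW.
have rd : 0 < rho x ^ d by exact: exprz_gt0.
have -> : `|P (uu x) (vv x)| * `|xi1 x| ^+ a2 * ((`|xi1 x| ^+ a1)^-1 * (rho x ^+ q)^-1)
   = `|P (uu x) (vv x)| * K by rewrite /K; ring.
have -> : (C + 1) * (`|xi1 x| ^+ a2 * (`|xi1 x| ^+ a1)^-1) * (rho x ^ d * (rho x ^+ q)^-1)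
   = ((C + 1) * rho x ^ d) * K by rewrite /K; ring.
apply: ler_wpM2r => //.
apply: (le_trans HP'); rewrite mulrDl mul1r lerDl; exact: ltW.
Qed.

Ltac MM := first [exact: (@measurable_itv R _) | exact: (measurableX (@measurable_itv R _) (@measurable_itv R _))].

Lemma not_ess (f : pt3 R -> R) :
  (forall M : R, exists a1 b1 a2 b2 a3 b3 : R, [/\ a1 < b1, a2 < b2, a3 < b3 &
     forall x : pt3 R, a1 < xi1 x < b1 -> a2 < xi2 x < b2 -> a3 < xi3 x < b3 -> M < `|f x|]) ->
  ~ ess_bounded f.
Proof.
move=> H [M [A [mA A0 sA]]].
have [a1 [b1 [a2 [b2 [a3 [b3 [l1 l2 l3 Hf]]]]]]] := H M.
pose B := (([set` `]a1, b1[%R] `*` [set` `]a2, b2[%R]) `*` [set` `]a3, b3[%R])%classic : set (pt3 R).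
have BA : (B `<=` A)%classic.
  move=> x [[/= x1 x2] x3]; apply: sA => /= hle.
  move: x1 x2 x3; rewrite !in_itv /= => x1 x2 x3.
  by have := Hf x x1 x2 x3; rewrite ltNge hle.
have LE : (leb3 (R:=R) B <= leb3 (R:=R) A)%E.
  apply: (@le_measure _ _ _ (leb3 (R:=R))) => //; rewrite inE //.
  apply: measurableX; [apply: measurableX|]; exact: measurable_itv.
have E1 : leb3 (R:=R) B = (((@lebesgue_measure R \x @lebesgue_measure R)
     ([set` `]a1, b1[%R] `*` [set` `]a2, b2[%R])%classic) * @lebesgue_measure R [set` `]a3, b3[%R])%E.
  by rewrite /leb3 product_measure1E //; MM.
have E2 : ((@lebesgue_measure R \x @lebesgue_measure R)%E
     ([set` `]a1, b1[%R] `*` [set` `]a2, b2[%R])%classic) =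
     (@lebesgue_measure R [set` `]a1, b1[%R] * @lebesgue_measure R [set` `]a2, b2[%R])%E.
  by rewrite product_measure1E //; MM.
move: LE; rewrite A0 E1 E2.
rewrite !lebesgue_measure_itv /= !lte_fin l1 l2 l3 /= -!EFinD -!EFinM lee_fin.
apply/negP; rewrite -ltNge; apply: mulr_gt0; first apply: mulr_gt0; by rewrite subr_gt0.
Qed.
Lemma big_lower (M eps Nv r : R) : eps = (250 * (`|M| + 1))^-1 ->
  eps ^+ 2 / 2 <= `|Nv| -> 0 < r -> r < 5 * eps -> M < `|Nv| / r ^+ 3.
Proof.
move=> he hN r0 r5.
have e0 : 0 < eps by rewrite he invr_gt0 mulr_gt0 // ltr_wpDl.
have t0 : 0 < r ^+ 3 by rewrite exprn_gt0.
have tT : r ^+ 3 < (5 * eps) ^+ 3 by rewrite ltrXn2r // ltW.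
have key : (`|M| + 1) * (5 * eps) ^+ 3 = eps ^+ 2 / 2.
  rewrite he; field; rewrite ?mulf_neq0 // gt_eqF // ltr_wpDl //.
rewrite ltr_pdivlMr //.
have hM : M <= `|M| := ler_norm M.
have hM0 : 0 <= `|M| := normr_ge0 M.
nra.
Qed.

Lemma DP0 : Dspec (fun a b => b * 1) (fun _ _ => 0) (fun _ _ => 1).
Proof.
move=> g h x w dg dh _ H2; apply: (dE _ (dM H2 (dC 1 x w))).
by rewrite /=; ring.
Qed.

Lemma m_repf (y : pt3 R) : xi1 y != 0 -> rho y != 0 -> m y = repf (fun a b => b * 1) 1 0 0 y.
Proof. by move=> _ _; rewrite /m /repf /vv /= !expr0 expr1 invr1 !mulr1 mul1r. Qed.

Lemma rho_gt0 (y : pt3 R) : rho y != 0 -> 0 < rho y.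
Proof. by move=> h2; rewrite lt_neqAle eq_sym h2 /rho sqrtr_ge0. Qed.

Lemma dm3 (y : pt3 R) : xi1 y != 0 -> rho y != 0 -> pd (e3 R) (@m R) y = uu y ^+ 2 / rho y ^+ 3.
Proof.
move=> h1 h2; rewrite /pd (locD _ _ _ _ m_repf h1 h2).
rewrite (step3 _ _ _ _ _ _ _ DP0 h1 h2) /repf /= -[uu y ^+ 2 + vv y ^+ 2]/(sq y) -rho2.
have r0 := rho_gt0 y h2.
rewrite rho2 /sq !expr0 invr1 !mul1r !mulr1.
by rewrite addrK.
Qed.

Lemma dm2 (y : pt3 R) : xi1 y != 0 -> rho y != 0 ->
  pd (e2 R) (@m R) y = - (uu y * vv y * xi1 y) / rho y ^+ 3.
Proof.
move=> h1 h2; rewrite /pd (locD _ _ _ _ m_repf h1 h2).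
rewrite (step2 _ _ _ _ _ _ _ DP0 h1 h2) /repf /=.
have r0 := rho_gt0 y h2.
rewrite !expr0 expr1 invr1 mul1r; field; by rewrite ?mulf_neq0 ?expf_neq0 ?h1 ?h2.
Qed.

Lemma dm1 (y : pt3 R) : xi1 y != 0 -> rho y != 0 ->
  pd (e1 R) (@m R) y = - (uu y ^+ 2 * vv y) / (xi1 y * rho y ^+ 3).
Proof.
move=> h1 h2; rewrite /pd (locD _ _ _ _ m_repf h1 h2).
rewrite (step1 _ _ _ _ _ _ _ DP0 h1 h2) /repf /=.
have r0 := rho_gt0 y h2.
rewrite !expr0 expr1; field; by rewrite ?mulf_neq0 ?expf_neq0 ?h1 ?h2.
Qed.

Lemma rho_lt (y : pt3 R) c : 0 < c -> sq y < c ^+ 2 -> rho y < c.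
Proof.
move=> c0 h; rewrite rhoE -(ger0_norm (ltW c0)) -sqrtr_sqr ltr_sqrt //.
by rewrite exprn_gt0.
Qed.

Lemma sq_pos (y : pt3 R) : 0 < uu y -> rho y != 0.
Proof.
move=> u0; rewrite rhoE sqrtr_eq0 -ltNge /sq.
by apply: ltr_wpDr; [exact: sqr_ge0 | rewrite exprn_gt0].
Qed.

Lemma eps_pos (M : R) : 0 < (250 * (`|M| + 1))^-1.
Proof. by rewrite invr_gt0 mulr_gt0 // ltr_wpDl. Qed.

Lemma nb3 : ~ ess_bounded (pd (e3 R) (@m R)).
Proof.
apply: not_ess => M; set eps := (250 * (`|M| + 1))^-1.
have e0 : 0 < eps := eps_pos M.
have epsE : eps = (250 * (`|M| + 1))^-1 by [].
clearbody eps.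
exists 1, 2, eps, (2 * eps), 0, eps; split; try lra.
move=> x /andP[l1 u1] /andP[l2 u2] /andP[l3 u3].
have up : eps < uu x by rewrite /uu; nra.
have v0 : 0 < vv x by rewrite /vv; lra.
have h1 : xi1 x != 0 by rewrite gt_eqF //; lra.
have h2 : rho x != 0 by apply: sq_pos; lra.
rewrite dm3 // normrM normfV (gtr0_norm (exprn_gt0 3 (rho_gt0 x h2))).
apply: (big_lower M eps) => //.
- rewrite normrX ger0_norm; last lra. nra.
- exact: rho_gt0.
- apply: rho_lt; first lra. rewrite /sq.
  have hu : uu x < 4 * eps by rewrite /uu; nra.
  have su : uu x ^+ 2 < (4 * eps) ^+ 2 by rewrite ltrXn2r //; lra.
  have sv : vv x ^+ 2 < (2 * eps) ^+ 2 by rewrite ltrXn2r /vv //; lra.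
  nra.
Qed.

Lemma nb2 : ~ ess_bounded (pd (e2 R) (@m R)).
Proof.
apply: not_ess => M; set eps := (250 * (`|M| + 1))^-1.
have e0 : 0 < eps := eps_pos M.
have epsE : eps = (250 * (`|M| + 1))^-1 by [].
clearbody eps.
exists 1, 2, eps, (2 * eps), eps, (2 * eps); split; try lra.
move=> x /andP[l1 u1] /andP[l2 u2] /andP[l3 u3].
have up : eps < uu x by rewrite /uu; nra.
have v0 : 0 < vv x by rewrite /vv; lra.
have h1 : xi1 x != 0 by rewrite gt_eqF //; lra.
have h2 : rho x != 0 by apply: sq_pos; lra.
rewrite dm2 // normrM normfV (gtr0_norm (exprn_gt0 3 (rho_gt0 x h2))).
apply: (big_lower M eps) => //.
- rewrite normrN !normrM !ger0_norm /vv; try lra.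
  have up' : eps < xi1 x * xi2 x := up.
  have A : eps * eps < xi1 x * xi2 x * xi3 x by nra.
  have A' : xi1 x * xi2 x * xi3 x <= xi1 x * xi2 x * xi3 x * xi1 x by nra.
  nra.
- exact: rho_gt0.
- apply: rho_lt; first lra. rewrite /sq.
  have hu : uu x < 4 * eps by rewrite /uu; nra.
  have su : uu x ^+ 2 < (4 * eps) ^+ 2 by rewrite ltrXn2r //; lra.
  have sv : vv x ^+ 2 < (2 * eps) ^+ 2 by rewrite ltrXn2r /vv //; lra.
  nra.
Qed.

Lemma nb1 : ~ ess_bounded (pd (e1 R) (@m R)).
Proof.
apply: not_ess => M; set eps := (250 * (`|M| + 1))^-1.
have e0 : 0 < eps := eps_pos M.
have epsE : eps = (250 * (`|M| + 1))^-1 by [].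
clearbody eps.
exists eps, (2 * eps), 1, 2, eps, (2 * eps); split; try lra.
move=> x /andP[l1 u1] /andP[l2 u2] /andP[l3 u3].
have up : eps < uu x by rewrite /uu; nra.
have v0 : 0 < vv x by rewrite /vv; lra.
have h1 : xi1 x != 0 by rewrite gt_eqF //; lra.
have h2 : rho x != 0 by apply: sq_pos; lra.
rewrite dm1 //.
have -> : - (uu x ^+ 2 * vv x) / (xi1 x * rho x ^+ 3) = - (uu x ^+ 2 * vv x / xi1 x) / rho x ^+ 3.
  by field; rewrite ?mulf_neq0 ?expf_neq0 ?h1 ?h2.
rewrite normrM normfV (gtr0_norm (exprn_gt0 3 (rho_gt0 x h2))).
apply: (big_lower M eps) => //.
- rewrite normrN !normrM normfV !ger0_norm /vv; try lra.
  rewrite ler_pdivlMr; last lra.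
  have up' : eps < xi1 x * xi2 x := up.
  have x1U : xi1 x <= xi1 x * xi2 x by nra.
  have s1 : eps * eps <= (xi1 x * xi2 x) * xi3 x by nra.
  have s2 : xi1 x * (eps * eps) <= xi1 x * ((xi1 x * xi2 x) * xi3 x) by rewrite ler_pM2l //; lra.
  have s3 : xi1 x * ((xi1 x * xi2 x) * xi3 x) <= (xi1 x * xi2 x) * ((xi1 x * xi2 x) * xi3 x).
    by rewrite ler_pM2r //; nra.
  have e2 : 0 <= eps * eps * xi1 x by nra.
  rewrite expr2. lra.
- exact: rho_gt0.
- apply: rho_lt; first lra. rewrite /sq.
  have hu : uu x < 4 * eps by rewrite /uu; nra.
  have su : uu x ^+ 2 < (4 * eps) ^+ 2 by rewrite ltrXn2r //; lra.
  have sv : vv x ^+ 2 < (2 * eps) ^+ 2 by rewrite ltrXn2r /vv //; lra.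
  nra.
Qed.
End S.

Theorem mainTheorem8 (R : realType) :
  (forall a1 a2 a3 : nat, exists C : R, 0 < C /\
     forall x : pt3 R, xi1 x != 0 -> rho x != 0 ->
       `|pdalpha a1 a2 a3 (@m R) x|
         <= C * `|xi1 x| ^ (a2%:Z - a1%:Z) * rho x ^- (a2 + a3)) /\
  ~ ess_bounded (pd (e1 R) (@m R)) /\
  ~ ess_bounded (pd (e2 R) (@m R)) /\
  ~ ess_bounded (pd (e3 R) (@m R)).
Proof.
split; first by move=> a1 a2 a3; exact: bound_all.
split; first exact: nb1.
split; [exact: nb2 | exact: nb3].
Qed.
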